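(* Let $C=[c_{j_1,j_2}]\in\mathbb{R}^{n_1\times n_2}$, $\mathbf d_1\in\mathbb{R}^{n_1}_{++}$, $\mathbf d_2\in\mathbb{R}^{n_2}_{++}$ with $\mathbf 1_{n_1}^\top\mathbf d_1=\mathbf 1_{n_2}^\top\mathbf d_2$. Then there exists a unique $(\mathbf x,\mathbf y)\in\mathbb{R}^{n_1}\times\mathbb{R}^{n_2}$ with $c_{j_1,j_2}-x_{j_1}-y_{j_2}>0$ for all $j_1,j_2$ and $\mathbf 1_{n_1}^\top\mathbf x=\mathbf 1_{n_2}^\top\mathbf y$, such that the matrix $[(c_{j_1,j_2}-x_{j_1}-y_{j_2})^{-1}]$ has row sums vector $\mathbf d_1$ and column sums vector $\mathbf d_2$.
   Context: $\mathbf 1_n$ is the all-ones vector and $\mathbb{R}^n_{++}$ the set of entrywise positive vectors. *)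

(* Defs.v *)
From mathcomp Require Import all_boot all_order all_algebra.
From mathcomp Require Import reals.

(* Main.v *)
Require Import Defs.
From mathcomp Require Import all_boot all_order all_algebra.
From mathcomp Require Import classical_sets reals.
From mathcomp Require Import ring lra.
Import Order.TTheory GRing.Theory Num.Theory.
Local Open Scope ring_scope.
Local Open Scope classical_set_scope.

Section Helpers.
Variable R : realType.

Lemma approx_le (a b K eta : R) : 0 <= K -> 0 < eta ->
  (forall e, 0 < e -> e < eta -> a <= b + e * K) -> a <= b.
Proof.
move=> K0 eta0 H; rewrite leNgt; apply/negP => ab.
pose e := Num.min (eta / 2) ((a - b) / (K + 1)).
have e0 : 0 < e by rewrite lt_min; apply/andP; split; [lra|apply: divr_gt0; lra].
have eeta : e < eta by rewrite /e gt_min; apply/orP; left; lra.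
have := H e e0 eeta.
have : e * K < a - b.
  have h1 : e <= (a - b) / (K + 1) by rewrite /e ge_min lexx orbT.
  have h2 : e * K <= (a - b) / (K + 1) * K by apply: ler_wpM2r.
  apply: (le_lt_trans h2).
  rewrite -mulrA gtr_pMr; last lra.
  by rewrite mulrC ltr_pdivrMr; lra.
lra.
Qed.

Lemma sum_scale n (a b : 'I_n -> R) t s : 0 < t -> 0 < s -> (forall j, 0 < a j) ->
  (forall j, a j * t <= b j * s) -> t * \sum_j (b j)^-1 <= s * \sum_j (a j)^-1.
Proof.
move=> t0 s0 a0 h; rewrite !mulr_sumr; apply: ler_sum => j _.
have b0 : 0 < b j.
  have : 0 < b j * s by apply: lt_le_trans (h j); apply: mulr_gt0.
  by rewrite pmulr_lgt0.
rewrite ler_pdivrMr // mulrAC ler_pdivlMr //.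
by rewrite mulrC [s * _]mulrC; exact: h.
Qed.

Lemma le_elem_sum n (F : 'I_n -> R) k : (forall j, 0 <= F j) -> F k <= \sum_j F j.
Proof.
move=> F0; rewrite (bigD1 k) //= lerDl; exact: sumr_ge0.
Qed.

Lemma sum_const_le n (F : 'I_n -> R) c : (forall j, F j <= c) -> \sum_j F j <= n%:R * c.
Proof.
move=> h; apply: le_trans (_ : \sum_(j < n) c <= _).
  by apply: ler_sum => j _; exact: h.
by rewrite sumr_const card_ord mulr_natl.
Qed.
End Helpers.

Section Main.
Variables (R : realType) (n1 n2 : nat) (C : 'M[R]_(n1,n2)).
Variables (d1 : 'I_n1 -> R) (d2 : 'I_n2 -> R).
Hypotheses (d1p : forall i, 0 < d1 i) (d2p : forall j, 0 < d2 j).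

Definition ent (x : 'I_n1 -> R) (z : 'I_n2 -> R) i j := C i j - x i + z j.
Definition rowS x z i := \sum_j (ent x z i j)^-1.
Definition colS x z j := \sum_i (ent x z i j)^-1.
Definition ok (J : pred 'I_n2) x z :=
  [/\ forall i j, 0 < ent x z i j, forall i, rowS x z i <= d1 i &
      forall j, J j -> d2 j <= colS x z j].

Lemma ent_lb J x z i j : ok J x z -> (d1 i)^-1 <= ent x z i j.
Proof.
case=> pos row _.
have h : (ent x z i j)^-1 <= d1 i.
  apply: le_trans (row i); apply: (@le_elem_sum R n2 (fun j => (ent x z i j)^-1)) => k.
  by rewrite invr_ge0 ltW.
by rewrite -lef_pV2 ?posrE ?invr_gt0 // invrK.
Qed.

Lemma x_bound J x z i j : ok J x z -> x i <= C i j + z j - (d1 i)^-1.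
Proof. move=> /(@ent_lb J x z i j); rewrite /ent; lra. Qed.

Lemma col_small x z j K : 0 < K -> (forall i, K <= ent x z i j) ->
  colS x z j <= n1%:R / K.
Proof.
move=> K0 h; apply: sum_const_le => i.
by rewrite lef_pV2 ?posrE //; apply: lt_le_trans (h i).
Qed.


Lemma sup_step (J : pred 'I_n2) k0 x0 z0 : ~~ J k0 -> ok J x0 z0 ->
  exists x z, [/\ ok J x z, (forall i, rowS x z i = d1 i),
     (forall j, J j -> colS x z j = d2 j) & (forall j, ~~ J j -> z j = z0 j)].
Proof.
move=> Jk0 ok0.
pose adm x z := ok J x z /\ (forall j, ~~ J j -> z j = z0 j).
have adm0 : adm x0 z0 by [].
pose Sx i := [set t | exists x z, adm x z /\ x i = t].
pose Sz j := [set t | exists x z, adm x z /\ z j = t].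
pose X i := C i k0 + z0 k0 - (d1 i)^-1.
have xb : forall x z i, adm x z -> x i <= X i.
  move=> x z i [okx pin]; rewrite /X -(pin k0 Jk0); exact: x_bound okx.
pose K j := (n1.+1)%:R / d2 j.
have K0 : forall j, 0 < K j by move=> j; apply: divr_gt0.
pose B j := \sum_i `|X i - C i j| + K j.
have zb : forall x z j, adm x z -> J j -> z j <= B j.
  move=> x z j [okx pin] Jj; rewrite leNgt; apply/negP => Bz.
  have h : forall i, K j <= ent x z i j.
    move=> i; have := xb x z i (conj okx pin).
    have : `|X i - C i j| <= \sum_i `|X i - C i j|.
      by apply: (@le_elem_sum R n1 (fun i => `|X i - C i j|)) => k.
    have := ler_norm (X i - C i j); rewrite /B /ent in Bz *; lra.
  have := @col_small x z j (K j) (K0 j) h.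
  case: okx => _ _ /(_ j Jj) hc.
  have : n1%:R / K j < d2 j.
    rewrite /K invf_div mulrA ltr_pdivrMr ?ltr0n // mulrC ltr_pM2l //.
    by rewrite ltr_nat.
  lra.
have hSx : forall i, has_sup (Sx i).
  move=> i; split; first by exists (x0 i); exists x0, z0.
  by exists (X i); rewrite /ubound /= => t [x [z [h <-]]]; exact: (xb x z i h).
have hSz : forall j, J j -> has_sup (Sz j).
  move=> j Jj; split; first by exists (z0 j); exists x0, z0.
  by exists (B j); rewrite /ubound /= => t [x [z [h <-]]]; exact: (zb x z j h Jj).
pose xs i := sup (Sx i).
pose zs j := if J j then sup (Sz j) else z0 j.
have F1 : forall x z i, adm x z -> x i <= xs i.
  by move=> x z i h; apply: (sup_upper_bound (hSx i)); exists x, z.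
have F2 : forall x z j, adm x z -> z j <= zs j.
  move=> x z j h; rewrite /zs; case: ifP => Jj.
    by apply: (sup_upper_bound (hSz j Jj)); exists x, z.
  by rewrite h.2 // Jj.
have F3 : forall i e, 0 < e -> exists x z, adm x z /\ xs i - e < x i.
  move=> i e e0; have [t [x [z [h <-]]] lt] := sup_adherent e0 (hSx i).
  by exists x, z.
have F4 : forall j e, J j -> 0 < e -> exists x z, adm x z /\ zs j - e < z j.
  move=> j e Jj e0; have [t [x [z [h <-]]] lt] := sup_adherent e0 (hSz j Jj).
  by exists x, z; rewrite /zs Jj.
have pos : forall i j, (d1 i)^-1 <= ent xs zs i j.
  move=> i j; apply: (@approx_le R _ _ 1 1 ler01 ltr01) => e e0 _.
  have [x [z [[okx pin] lt]]] := F3 i e e0; have [okp okr okc] := okx.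
  have := @ent_lb J x z i j okx; have := F2 x z j (conj okx pin).
  rewrite /ent; lra.
have entpos : forall i j, 0 < ent xs zs i j.
  by move=> i j; apply: lt_le_trans (pos i j); rewrite invr_gt0.
have rowS0 : forall x z i, (forall j, 0 < ent x z i j) -> 0 <= rowS x z i.
  by move=> x z i h; apply: sumr_ge0 => j _; rewrite invr_ge0 ltW.
have colS0 : forall x z j, (forall i, 0 < ent x z i j) -> 0 <= colS x z j.
  by move=> x z j h; apply: sumr_ge0 => i _; rewrite invr_ge0 ltW.
have one_le : forall x z i j, (d1 i)^-1 <= ent x z i j -> 1 <= d1 i * ent x z i j.
  by move=> x z i j h; rewrite -(mulfV (lt0r_neq0 (d1p i))) ler_pM2l.
have rowle : forall i, rowS xs zs i <= d1 i.
  move=> i; apply: (@approx_le R _ _ (d1 i * rowS xs zs i) (d1 i)^-1) => [||e e0 elt].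
  - by apply: mulr_ge0; [exact: ltW | exact: rowS0].
  - by rewrite invr_gt0.
  have [x [z [[okx pin] lt]]] := F3 i e e0; have [okp okr okc] := okx.
  have ed : e * d1 i < 1 by rewrite -ltr_pdivlMr // div1r.
  pose t := 1 - e * d1 i.
  have t0 : 0 < t by rewrite /t; lra.
  have hs := @sum_scale R n2 (fun j => ent x z i j) (fun j => ent xs zs i j) t 1 t0 ltr01
     (fun j => okp i j).
  have : t * rowS xs zs i <= 1 * rowS x z i.
    apply: hs => j /=.
    have h1 := one_le x z i j (@ent_lb J x z i j okx).
    have h2 : e * 1 <= e * (d1 i * ent x z i j) by apply: ler_wpM2l => //; exact: ltW.
    have := F2 x z j (conj okx pin).
    rewrite /t /ent in h2 *; lra.
  have := okr i; rewrite /t; lra.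
have colge : forall j, J j -> d2 j <= colS xs zs j.
  move=> j Jj; pose D := \sum_i d1 i + 1.
  have dD : forall i, d1 i <= D.
    move=> i; have := @le_elem_sum R n1 d1 i (fun k => ltW (d1p k)); rewrite /D; lra.
  have D0 : 0 < D by rewrite /D; have := @sumr_ge0 R _ (index_enum 'I_n1) xpredT d1 (fun k _ => ltW (d1p k)); lra.
  apply: (@approx_le R _ _ (colS xs zs j * D) 1) => [||e e0 _].
  - by apply: mulr_ge0; [exact: colS0 | exact: ltW].
  - exact: ltr01.
  have [x [z [[okx pin] lt]]] := F4 j e Jj e0; have [okp okr okc] := okx.
  have s0 : 0 < 1 + e * D by have := mulr_gt0 e0 D0; lra.
  have hs := @sum_scale R n1 (fun i => ent xs zs i j) (fun i => ent x z i j) 1 (1 + e * D)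
     ltr01 s0 (fun i => entpos i j).
  have : 1 * colS x z j <= (1 + e * D) * colS xs zs j.
    apply: hs => i /=.
    have h1 := one_le x z i j (@ent_lb J x z i j okx).
    have h3 : d1 i * ent x z i j <= D * ent x z i j by apply: ler_wpM2r; [exact: ltW (okp i j)| exact: dD].
    have h2 : e * 1 <= e * (D * ent x z i j) by apply: ler_wpM2l; [exact: ltW | lra].
    have := F1 x z i (conj okx pin).
    rewrite /ent in h2 *; lra.
  have := okc j Jj; lra.
have admS : adm xs zs.
  split; first by split.
  by move=> j Jj; rewrite /zs (negbTE Jj).
have rowT : forall i, rowS xs zs i = d1 i.
  move=> i; apply/eqP; rewrite eq_le rowle /= leNgt; apply/negP => ltS.
  set S := rowS xs zs i in ltS.
  have S0 : 0 <= S by exact: rowS0.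
  pose t := (S + d1 i) / (2 * d1 i).
  have td : t * d1 i = (S + d1 i) / 2.
    by rewrite /t; field; apply: lt0r_neq0.
  have t0 : 0 < t by rewrite /t; apply: divr_gt0; [|apply: mulr_gt0]; have := d1p i; lra.
  have t1 : t < 1.
    by rewrite -(ltr_pM2r (d1p i)) mul1r td; have := d1p i; lra.
  pose dl := (1 - t) / d1 i.
  have dld : dl * d1 i = 1 - t by rewrite /dl; field; apply: lt0r_neq0.
  have dl0 : 0 < dl by rewrite /dl; apply: divr_gt0 => //; lra.
  pose x' k := if k == i then xs i + dl else xs k.
  have ex : forall k j, ent x' zs k j = if k == i then ent xs zs i j - dl else ent xs zs k j.
    by move=> k j; rewrite /ent /x'; case: eqP => [->|_] //; lra.
  have le' : forall k j, ent x' zs k j <= ent xs zs k j.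
    by move=> k j; rewrite ex; case: eqP => [->|_] //; lra.
  have sc : forall j, ent xs zs i j * t <= ent x' zs i j * 1.
    move=> j; rewrite ex eqxx mulr1.
    have h1 := one_le xs zs i j (pos i j).
    have h2 : dl * 1 <= dl * (d1 i * ent xs zs i j) by apply: ler_wpM2l => //; exact: ltW.
    have : dl * (d1 i * ent xs zs i j) = (1 - t) * ent xs zs i j by rewrite mulrA dld.
    have := entpos i j; nra.
  have pos' : forall k j, 0 < ent x' zs k j.
    move=> k j; case: (k =P i) => [->|ne].
      have := sc j; have := mulr_gt0 (entpos i j) t0; lra.
    by rewrite ex (introF eqP ne).
  have adm' : adm x' zs.
    split; last exact: admS.2.
    split => //.
    - move=> k; case: (k =P i) => [->|ne].
        have hs : t * rowS x' zs i <= 1 * rowS xs zs i :=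
          @sum_scale R n2 (fun j => ent xs zs i j) (fun j => ent x' zs i j) t 1 t0 ltr01
          (fun j => entpos i j) sc.
        rewrite -(ler_pM2l t0) mulrC td; rewrite mul1r -/S in hs; lra.
      rewrite /rowS (eq_bigr (fun j => (ent xs zs k j)^-1)); first exact: rowle.
      by move=> j _; rewrite ex (introF eqP ne).
    - move=> j Jj; apply: le_trans (colge j Jj) _; apply: ler_sum => k _.
      by rewrite lef_pV2 ?posrE.
  have := F1 x' zs i adm'; rewrite /x' eqxx; lra.
have colT : forall j, J j -> colS xs zs j = d2 j.
  move=> j Jj; apply/eqP; rewrite eq_le colge // andbT leNgt; apply/negP => ltS.
  set S := colS xs zs j in ltS.
  pose D := \sum_i d1 i + 1.
  have dD : forall i, d1 i <= D.
    move=> i; have := @le_elem_sum R n1 d1 i (fun k => ltW (d1p k)); rewrite /D; lra.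
  have D0 : 0 < D by rewrite /D; have := @sumr_ge0 R _ (index_enum 'I_n1) xpredT d1 (fun k _ => ltW (d1p k)); lra.
  pose s := (S + d2 j) / (2 * d2 j).
  have sd : s * d2 j = (S + d2 j) / 2.
    by rewrite /s; field; apply: lt0r_neq0.
  have s1 : 1 < s.
    by rewrite -(ltr_pM2r (d2p j)) mul1r sd; have := d2p j; lra.
  have s0 : 0 < s by lra.
  pose dl := (s - 1) / D.
  have dld : dl * D = s - 1 by rewrite /dl; field; apply: lt0r_neq0.
  have dl0 : 0 < dl by rewrite /dl; apply: divr_gt0 => //; lra.
  pose z' k := if k == j then zs j + dl else zs k.
  have ez : forall i k, ent xs z' i k = if k == j then ent xs zs i j + dl else ent xs zs i k.
    by move=> i k; rewrite /ent /z'; case: eqP => [->|_] //; lra.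
  have le' : forall i k, ent xs zs i k <= ent xs z' i k.
    by move=> i k; rewrite ez; case: eqP => [->|_] //; lra.
  have pos' : forall i k, 0 < ent xs z' i k.
    by move=> i k; apply: lt_le_trans (le' i k).
  have sc : forall i, ent xs z' i j * 1 <= ent xs zs i j * s.
    move=> i; rewrite ez eqxx mulr1.
    have h1 := one_le xs zs i j (pos i j).
    have h3 : d1 i * ent xs zs i j <= D * ent xs zs i j by apply: ler_wpM2r; [exact: ltW (entpos i j)| exact: dD].
    have h2 : dl * 1 <= dl * (D * ent xs zs i j) by apply: ler_wpM2l; [exact: ltW | lra].
    have : dl * (D * ent xs zs i j) = (s - 1) * ent xs zs i j by rewrite mulrA dld.
    lra.
  have adm' : adm xs z'.
    split.
      split => //.
      - move=> i; apply: le_trans (rowle i); apply: ler_sum => k _.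
        by rewrite lef_pV2 ?posrE.
      - move=> k Jk; case: (k =P j) => [->|ne].
          have hs : 1 * colS xs zs j <= s * colS xs z' j :=
            @sum_scale R n1 (fun i => ent xs z' i j) (fun i => ent xs zs i j) 1 s ltr01 s0
            (fun i => pos' i j) sc.
          rewrite -(ler_pM2l s0) sd; rewrite mul1r -/S in hs; lra.
        rewrite /colS (eq_bigr (fun i => (ent xs zs i k)^-1)); first exact: colge.
        by move=> i _; rewrite ez (introF eqP ne).
    move=> k Jk; rewrite /z'; case: eqP => [ekj|_]; first by rewrite ekj Jj in Jk.
    exact: admS.2.
  have := F2 xs z' j adm'; rewrite /z' eqxx; lra.
exists xs, zs; split => //; last by move=> j Jj; rewrite /zs (negbTE Jj).
Qed.

Lemma ok_mono (J J' : pred 'I_n2) x z : (forall j, J' j -> J j) -> ok J x z -> ok J' x z.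
Proof. by move=> h [p r c]; split => // j /h; exact: c. Qed.

Lemma ok_base (J : pred 'I_n2) : (forall j, ~~ J j) -> exists x z, ok J x z.
Proof.
move=> nJ.
pose K i := (n2.+1)%:R / d1 i.
have K0 : forall i, 0 < K i by move=> i; apply: divr_gt0.
exists (fun i => - (\sum_j `|C i j|) - K i), (fun _ => 0).
have hK : forall i j, K i <= ent (fun i => - (\sum_j `|C i j|) - K i) (fun _ => 0) i j.
  move=> i j; rewrite /ent.
  have := @le_elem_sum R n2 (fun j => `|C i j|) j (fun _ => normr_ge0 _).
  have := ler_norm (- C i j); rewrite normrN; lra.
split.
- by move=> i j; apply: lt_le_trans (hK i j).
- move=> i; apply: le_trans (@sum_const_le R n2 _ (K i)^-1 _) _.
    by move=> j; rewrite lef_pV2 ?posrE //; apply: lt_le_trans (hK i j).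
  rewrite /K invf_div mulrA ler_pdivrMr ?ltr0n // mulrC ler_pM2l //.
  by rewrite ler_nat.
- by move=> j; rewrite (negbTE (nJ j)).
Qed.

Hypothesis hsum : \sum_i d1 i = \sum_j d2 j.

Lemma mass x z : \sum_j colS x z j = \sum_i rowS x z i.
Proof. by rewrite /colS /rowS exchange_big. Qed.

Lemma add_col (J : pred 'I_n2) k x0 z0 : ~~ J k -> ok J x0 z0 ->
  exists x z, ok [pred j | (j == k) || J j] x z.
Proof.
move=> Jk ok0.
pose X i := C i k + z0 k - (d1 i)^-1.
pose K j := (n1.+1)%:R / d2 j.
have K0 : forall j, 0 < K j by move=> j; apply: divr_gt0.
pose L := \sum_j (\sum_i `|C i j - X i + z0 j| + K j).
have L0 : 0 <= L.
  apply: sumr_ge0 => j _; apply: addr_ge0; [apply: sumr_ge0 => i _ | exact: ltW].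
  exact: normr_ge0.
have hL : forall i j, K j <= C i j - X i + z0 j + L.
  move=> i j.
  have h1 := @le_elem_sum R n1 (fun i => `|C i j - X i + z0 j|) i (fun _ => normr_ge0 _).
  have h2 := @le_elem_sum R n2 (fun j => \sum_i `|C i j - X i + z0 j| + K j) j
    (fun j => addr_ge0 (sumr_ge0 _ (fun i _ => normr_ge0 _)) (ltW (K0 j))).
  have := ler_norm (- (C i j - X i + z0 j)); rewrite normrN /L /=; lra.
pose z1 j := if J j || (j == k) then z0 j else z0 j + L.
have ez : forall i j, ent x0 z0 i j <= ent x0 z1 i j.
  by move=> i j; rewrite /ent /z1; case: ifP => _; lra.
have ok1 : ok J x0 z1.
  case: ok0 => p r c; split.
  - by move=> i j; apply: lt_le_trans (ez i j).
  - move=> i; apply: le_trans (r i); apply: ler_sum => j _.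
    by rewrite lef_pV2 ?posrE //; apply: lt_le_trans (ez i j).
  - move=> j Jj; rewrite /colS (eq_bigr (fun i => (ent x0 z0 i j)^-1)); first exact: c.
    by move=> i _; rewrite /ent /z1 Jj.
have [x [z [okx rT cT pin]]] := @sup_step J k x0 z1 Jk ok1.
have xb : forall i, x i <= X i.
  move=> i; have := @x_bound J x z i k okx.
  by rewrite (pin k Jk) /z1 eqxx orbT.
have small : forall j, ~~ J j -> j != k -> colS x z j <= d2 j.
  move=> j Jj jk; apply: le_trans (@col_small x z j (K j) (K0 j) _) _.
    move=> i; rewrite /ent (pin j Jj) /z1 (negbTE Jj) (negbTE jk) /=.
    have := hL i j; have := xb i; lra.
  rewrite /K invf_div mulrA ler_pdivrMr ?ltr0n // mulrC ler_pM2l //.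
  by rewrite ler_nat.
exists x, z; case: okx => p r c; split => //.
move=> j /orP [/eqP jk | Jj]; last exact: c.
rewrite jk.
have tot : \sum_j (colS x z j - d2 j) = 0.
  by rewrite sumrB mass (eq_bigr _ (fun i _ => rT i)) hsum subrr.
rewrite (bigD1 k) //= in tot.
have : \sum_(j < n2 | j != k) (colS x z j - d2 j) <= 0.
  apply: sumr_le0 => l lk; case: (boolP (J l)) => Jl.
    by rewrite cT // subrr.
  by rewrite subr_le0; exact: small.
lra.
Qed.


Lemma exists_all (k0 : 'I_n2) : exists x z, [/\ forall i j, 0 < ent x z i j,
  forall i, rowS x z i = d1 i & forall j, colS x z j = d2 j].
Proof.
pose Jm m := [pred j : 'I_n2 | (j < m)%N && (j != k0)].
have Q : forall m, exists x z, ok (Jm m) x z.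
  elim=> [|m [x0 [z0 ok0]]].
    by apply: ok_base => j; rewrite /Jm /=.
  case: (pickP (fun k : 'I_n2 => (val k == m) && (k != k0))) => [k /andP [/eqP km kk0] | none].
    have nJ : ~~ Jm m k by rewrite /= km ltnn.
    have [x [z okx]] := @add_col (Jm m) k x0 z0 nJ ok0.
    exists x, z; apply: ok_mono okx => j /= /andP [jm jk0].
    rewrite ltnS leq_eqVlt in jm; case/orP: jm => [/eqP jm | jm].
      by apply/orP; left; apply/eqP/val_inj; rewrite /= jm km.
    by rewrite jm jk0 orbT.
  exists x0, z0; apply: ok_mono ok0 => j /= /andP [jm jk0].
  rewrite ltnS leq_eqVlt in jm; case/orP: jm => [/eqP jm | jm]; last by rewrite jm.
  by have := none j; rewrite /= jm eqxx jk0.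
have [x0 [z0 ok0]] := Q n2.
have nk0 : ~~ Jm n2 k0 by rewrite /= eqxx andbF.
have [x [z [okx rT cT _]]] := @sup_step (Jm n2) k0 x0 z0 nk0 ok0.
exists x, z; case: okx => p _ _; split => // j.
case: (eqVneq j k0) => [-> | jk]; last by apply: cT; rewrite /= ltn_ord.
have tot : \sum_j (colS x z j - d2 j) = 0.
  by rewrite sumrB mass (eq_bigr _ (fun i _ => rT i)) hsum subrr.
rewrite (bigD1 k0) //= big1 ?addr0 in tot; last first.
  by move=> l lk; rewrite cT ?subrr //= ltn_ord lk.
by apply/eqP; rewrite -subr_eq0 tot.
Qed.

End Main.

Lemma uniq_fun (R : realType) n1 n2 (C : 'M[R]_(n1, n2)) (d1 : 'I_n1 -> R) (d2 : 'I_n2 -> R)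
  (x y x' y' : _ -> R) : (0 < n1)%N -> (0 < n2)%N ->
  (forall i j, 0 < C i j - x i - y j) -> \sum_i x i = \sum_j y j ->
  (forall i, \sum_j (C i j - x i - y j)^-1 = d1 i) ->
  (forall j, \sum_i (C i j - x i - y j)^-1 = d2 j) ->
  (forall i j, 0 < C i j - x' i - y' j) -> \sum_i x' i = \sum_j y' j ->
  (forall i, \sum_j (C i j - x' i - y' j)^-1 = d1 i) ->
  (forall j, \sum_i (C i j - x' i - y' j)^-1 = d2 j) ->
  (forall i, x' i = x i) /\ (forall j, y' j = y j).
Proof.
move=> n10 n20 p s r c p' s' r' c'.
pose e i j := C i j - x i - y j.
pose e' i j := C i j - x' i - y' j.
pose a i := x' i - x i.
pose b j := y' j - y j.
pose f i j := (e' i j)^-1 - (e i j)^-1.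
have ea : forall i j, e i j - e' i j = a i + b j by move=> i j; rewrite /e /e' /a /b; lra.
have r0 : forall i, \sum_j f i j = 0.
  by move=> i; rewrite sumrB r' r subrr.
have c0 : forall j, \sum_i f i j = 0.
  by move=> j; rewrite sumrB c' c subrr.
pose T i j := f i j * (e i j - e' i j).
have Tsum : \sum_i \sum_j T i j = 0.
  rewrite (eq_bigr (fun i => \sum_j (f i j * a i) + \sum_j (f i j * b j))); last first.
    by move=> i _; rewrite -big_split /=; apply: eq_bigr => j _; rewrite /T ea mulrDr.
  rewrite big_split /= [X in _ + X]exchange_big /=.
  rewrite (eq_bigr (fun i => 0)) => [|i _]; last by rewrite -mulr_suml r0 mul0r.
  rewrite [X in _ + X](eq_bigr (fun j => 0)) => [|j _]; last by rewrite -mulr_suml c0 mul0r.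
  by rewrite !big1 ?addr0.
have TE : forall i j, T i j = (e i j - e' i j) ^+ 2 / (e i j * e' i j).
  move=> i j; rewrite /T /f; field.
  have pe := p i j; have pe' := p' i j.
  by rewrite !lt0r_neq0.
have T0 : forall i j, 0 <= T i j.
  move=> i j; rewrite TE; apply: divr_ge0; first exact: sqr_ge0.
  by apply: mulr_ge0; apply: ltW; [exact: p | exact: p'].
have Tz : forall i j, T i j = 0.
  move=> i j.
  have h := @psumr_eq0P R _ xpredT (fun i => \sum_j T i j)
    (fun i _ => sumr_ge0 _ (fun j _ => T0 i j)) Tsum i isT.
  exact: (@psumr_eq0P R _ xpredT (T i) (fun j _ => T0 i j) h j isT).
have ab : forall i j, a i + b j = 0.
  move=> i j; have := Tz i j; rewrite TE => /eqP.
  have pe : 0 < e i j := p i j; have pe' : 0 < e' i j := p' i j.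
  by rewrite mulf_eq0 invr_eq0 mulf_eq0 mulf_eq0 (gt_eqF pe) (gt_eqF pe') !orbF orbb ea => /eqP.
pose i0 : 'I_n1 := Ordinal n10.
pose j0 : 'I_n2 := Ordinal n20.
pose cc := a i0.
have ha : forall i, a i = cc by move=> i; have := ab i j0; have := ab i0 j0; rewrite /cc; lra.
have hb : forall j, b j = - cc by move=> j; have := ab i0 j; rewrite /cc; lra.
have sa : \sum_i a i = \sum_j b j by rewrite !sumrB s s'.
have e1 : \sum_i a i = cc *+ n1.
  by rewrite (eq_bigr (fun _ => cc)) ?sumr_const ?card_ord // => i _; exact: ha.
have e2 : \sum_j b j = (- cc) *+ n2.
  by rewrite (eq_bigr (fun _ => - cc)) ?sumr_const ?card_ord // => j _; exact: hb.
have : cc *+ (n1 + n2) == 0 by rewrite mulrnDr -e1 sa e2 mulNrn addNr.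
rewrite mulrn_eq0 => /orP [|/eqP cc0]; first by rewrite addn_eq0 => /andP [/eqP n0]; by move=> _; exfalso; move: n0 (n10) => ->.
split => [i|j].
  by have := ha i; rewrite cc0 /a; lra.
by have := hb j; rewrite cc0 oppr0 /b; lra.
Qed.

Local Open Scope ring_scope.

Theorem corollary2p8 (R : realType) (n1 n2 : nat)
  (C : 'M[R]_(n1, n2)) (d1 : 'cV[R]_n1) (d2 : 'cV[R]_n2) :
  (forall j1, 0 < d1 j1 0) -> (forall j2, 0 < d2 j2 0) ->
  \sum_(j1 < n1) d1 j1 0 = \sum_(j2 < n2) d2 j2 0 ->
  let P := fun (x : 'cV[R]_n1) (y : 'cV[R]_n2) =>
    [/\ (forall j1 j2, 0 < C j1 j2 - x j1 0 - y j2 0),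
        \sum_(j1 < n1) x j1 0 = \sum_(j2 < n2) y j2 0,
        (forall j1, \sum_(j2 < n2) (C j1 j2 - x j1 0 - y j2 0)^-1 = d1 j1 0) &
        (forall j2, \sum_(j1 < n1) (C j1 j2 - x j1 0 - y j2 0)^-1 = d2 j2 0)] in
  exists x : 'cV[R]_n1, exists y : 'cV[R]_n2,
    P x y /\ forall x' y', P x' y' -> x' = x /\ y' = y.
Proof.
move=> hd1 hd2 hs P.
have [n10|n1pos] := posnP n1; have [n20|n2pos] := posnP n2.
- subst n1 n2; exists 0, 0; split.
    split; [by move=> [] | by rewrite !big_ord0 | by move=> [] | by move=> []].
  by move=> x' y' _; split; apply: flatmx0.
- exfalso; subst n1; have := hd2 (Ordinal n2pos).
  have := @le_elem_sum R n2 (fun j => d2 j 0) (Ordinal n2pos) (fun j => ltW (hd2 j)).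
  by rewrite -hs big_ord0; lra.
- exfalso; subst n2; have := hd1 (Ordinal n1pos).
  have := @le_elem_sum R n1 (fun j => d1 j 0) (Ordinal n1pos) (fun j => ltW (hd1 j)).
  by rewrite hs big_ord0; lra.
have [xf [zf [pos rT cT]]] := @exists_all R n1 n2 C (fun i => d1 i 0) (fun j => d2 j 0)
  hd1 hd2 hs (Ordinal n2pos).
pose c := (\sum_j (- zf j) - \sum_i xf i) / (n1 + n2)%:R.
pose xa i := xf i + c.
pose ya j := - zf j - c.
have ee : forall i j, C i j - xa i - ya j = @ent R n1 n2 C xf zf i j.
  by move=> i j; rewrite /ent /xa /ya; lra.
have pa : forall i j, 0 < C i j - xa i - ya j by move=> i j; rewrite ee.
have ra : forall i, \sum_j (C i j - xa i - ya j)^-1 = d1 i 0.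
  by move=> i; rewrite -(rT i) /rowS; apply: eq_bigr => j _; rewrite ee.
have ca : forall j, \sum_i (C i j - xa i - ya j)^-1 = d2 j 0.
  by move=> j; rewrite -(cT j) /colS; apply: eq_bigr => i _; rewrite ee.
have sa : \sum_i xa i = \sum_j ya j.
  rewrite /xa /ya !big_split /= !sumr_const !card_ord sumrN.
  have nz : (n1 + n2)%:R != 0 :> R by rewrite pnatr_eq0 addn_eq0 negb_and -lt0n n1pos.
  have hc : c * (n1%:R + n2%:R) = \sum_j (- zf j) - \sum_i xf i.
    by rewrite /c -natrD divfK.
  rewrite sumrN in hc; rewrite mulNrn -[c *+ n1]mulr_natr -[c *+ n2]mulr_natr; lra.
exists (\col_i xa i), (\col_j ya j); split.
  split.
  - by move=> i j; rewrite !mxE.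
  - rewrite (eq_bigr (fun i => xa i)) => [|i _]; last by rewrite mxE.
    by rewrite sa; apply: eq_bigr => j _; rewrite mxE.
  - by move=> i; rewrite -(ra i); apply: eq_bigr => k _; rewrite !mxE.
  - by move=> j; rewrite -(ca j); apply: eq_bigr => k _; rewrite !mxE.
move=> x2 y2 [p2 s2 r2 c2].
have [hx hy] := @uniq_fun R n1 n2 C (fun i => d1 i 0) (fun j => d2 j 0) xa ya
  (fun i => x2 i 0) (fun j => y2 j 0) n1pos n2pos pa sa ra ca p2 s2 r2 c2.
by split; apply/matrixP => i j; rewrite (ord1 j) mxE; [exact: hx | exact: hy].
Qed.
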